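(* Let $f(z)=\sum_{j\ge0}\binom{2j}{j}\left(\sum_{k=0}^{2j}(-1)^k\binom{2j}{k}^4\right)z^j\in1+z\mathbb{Z}[[z]]$. Then there is a finite set $\mathcal{J}$ of primes such that $f\in\mathcal{L}(\mathcal{P}\setminus\mathcal{J})$, where $\mathcal{P}$ is the set of all primes. (In the course of this, for every prime $p\neq2$ one has $\Lambda_p(f_{|p})=f_{|p}$.)
   Context: For a prime $p$, $\mathbb{Z}_{(p)}$ is the localization of $\mathbb{Z}$ at $(p)$; for $f=\sum a(n)z^n\in\mathbb{Z}_{(p)}[[z]]$, $f_{|p}(z)=\sum (a(n)\bmod p)z^n$; $\Lambda_p(\sum a(n)z^n)=\sum a(np)z^n$. The height of a rational function $P/Q$ with $P,Q$ coprime polynomials is $\max(\deg P,\deg Q)$. For an infinite set $\mathcal{S}$ of primes, $\mathcal{L}(\mathcal{S})$ is the set of $f\in 1+z\mathbb{Q}[[z]]$ such that there is a constant $C>0$ independent of $p$ with: for every $p\in\mathcal{S}$, $f\in\mathbb{Z}_{(p)}[[z]]$, and there exist an integer $l_p>0$ and $A_p\in\mathbb{F}_p(z)\cap\mathbb{F}_p[[z]]$ with $f_{|p}(z)=A_p(z)f_{|p}(z^{p^{l_p}})$ and height of $A_p$ at most $Cp^{l_p}$. *)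

(* Defs.v *)
From HB Require Import structures.
From mathcomp Require Import all_boot all_order all_algebra.
Set Implicit Arguments. Unset Strict Implicit. Unset Printing Implicit Defensive.
Import Order.TTheory GRing.Theory Num.Theory.
Local Open Scope ring_scope.

Definition pseries (R : Type) := nat -> R.

Definition smul (R : nzRingType) (a b : pseries R) : pseries R :=
  fun n => \sum_(i < n.+1) a i * b (n - i)%N.

Definition sofp (R : nzRingType) (P : {poly R}) : pseries R := fun n => P`_n.

(* g(z) |-> g(z^m) *)
Definition ssubst_pow (R : nzRingType) (m : nat) (g : pseries R) : pseries R :=
  fun n => if (m %| n)%N then g (n %/ m)%N else 0.

Definition Lambda (R : Type) (p : nat) (g : pseries R) : pseries R :=
  fun n => g (n * p)%N.

Definition redp (p : nat) (a : nat -> int) : pseries 'F_p :=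
  fun n => (a n)%:~R.

(* degree, with the convention deg 0 = 0 (only used in upper bounds) *)
Definition pdeg (R : nzRingType) (P : {poly R}) : nat := (size P).-1.

(* A in F_p(z) ∩ F_p[[z]]: A is a power series equal to P/Q, P Q coprime,
   and the height of A is max(deg P, deg Q). *)
Definition rat_series_height (p : nat) (A : pseries 'F_p) (h : nat) : Prop :=
  exists P Q : {poly 'F_p},
    [/\ Q != 0, coprimep P Q, smul (sofp Q) A = sofp P
      & maxn (pdeg P) (pdeg Q) = h].

(* The set L(S) for an integer-coefficient series a (so a is in Z_(p)[[z]]
   for every p), S described by a predicate on primes. *)
Definition in_L (S : nat -> Prop) (a : nat -> int) : Prop :=
  exists C : rat, 0 < C /\
    forall p : nat, prime p -> S p ->
      exists (l : nat) (A : pseries 'F_p) (h : nat),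
        [/\ (0 < l)%N, rat_series_height A h,
            redp p a = smul A (ssubst_pow (p ^ l)%N (redp p a))
          & (h%:Q <= C * (p ^ l)%N%:Q)].

Definition fcoef (j : nat) : int :=
  ('C(2 * j, j))%:Z *
  \sum_(k < (2 * j).+1) (-1) ^+ k * ('C(2 * j, k) ^ 4)%:Z.

(* Main.v *)
Require Import Defs.
From HB Require Import structures.
From mathcomp Require Import all_boot all_order all_algebra.
From mathcomp Require Import ring zify.
From Stdlib Require Import FunctionalExtensionality.
Set Implicit Arguments. Unset Strict Implicit. Unset Printing Implicit Defensive.
Import Order.TTheory GRing.Theory Num.Theory.
Local Open Scope ring_scope.
Lemma coefXD1 (R : nzRingType) n i : ((('X + 1 : {poly R}) ^+ n)`_i) = ('C(n, i))%:R.
Proof.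
elim: n i => [|n IH] i.
  by rewrite expr0 coef1; case: i.
rewrite exprSr mulrDr mulr1 coefD coefMX.
case: i => [|i] /=; first by rewrite add0r IH !bin0.
by rewrite !IH binS natrD addrC.
Qed.

Section Lucas.
Variable p : nat.
Hypothesis hp : prime p.

Lemma frob_poly : ('X + 1 : {poly 'F_p}) ^+ p = 'X^p + 1.
Proof.
have hc : p \in [pchar {poly 'F_p}] by rewrite pchar_poly pchar_Fp.
by rewrite -(pFrobenius_autE hc) pFrobenius_autD_comm ?pFrobenius_aut1 //; exact: commr1.
Qed.

Lemma lucas a b c d : (b < p)%N -> (d < p)%N ->
  ('C(a * p + b, c * p + d))%:R = ('C(a, c) * 'C(b, d))%:R :> 'F_p.
Proof.
move=> hb hd.
rewrite -coefXD1 exprD mulnC exprM frob_poly exprD1n mulr_suml coef_sum.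
have H : forall i : 'I_a.+1, ((('X^p) ^+ i *+ 'C(a, i) * ('X + 1) ^+ b : {poly 'F_p})`_(c * p + d))
   = if val i == c then ('C(b, d))%:R *+ 'C(a, i) else 0.
  move=> i; rewrite mulrnAl coefMn -exprM coefXnM coefXD1.
  case: ifP => hi.
    case: eqP => [ei|_]; last by rewrite mul0rn.
    by move: hi; rewrite ei; nia.
  case: eqP => [ei|ne].
    by rewrite ei mulnC addKn.
  rewrite [(p * _)%N]mulnC in hi *.
  have [lt|gt|eq] := ltngtP (val i) c; last by case: ne.
    rewrite bin_small ?mul0rn //.
    have : (i.+1 * p <= c * p)%N by rewrite leq_mul2r lt orbT.
    rewrite mulSn; lia.
  have : (c.+1 * p <= i * p)%N by rewrite leq_mul2r gt orbT.
  rewrite mulSn; lia.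
rewrite (eq_bigr _ (fun i _ => H i)) -big_mkcond /=.
case: (ltnP c a.+1) => hc.
  rewrite (big_pred1 (Ordinal hc)) /=; last by move=> i; rewrite /= -val_eqE.
  by rewrite natrM mulr_natl.
rewrite big_pred0; last by move=> i; apply/eqP => ei; move: (ltn_ord i); lia.
by rewrite bin_small // mul0n.
Qed.

Lemma sum_reindex (R : nzRingType) (G : nat -> R) M :
  \sum_(k < M * p) G k = \sum_(m < M) \sum_(t < p) G (m * p + t)%N.
Proof.
elim: M => [|M IH]; first by rewrite mul0n !big_ord0.
rewrite big_ord_recr /= -IH mulSnr big_split_ord /=.
by congr (_ + _); apply: eq_bigr => i _; rewrite addnC.
Qed.

Definition T (N : nat) : 'F_p := \sum_(k < N.+1) (-1) ^+ k * ('C(N, k)%:R) ^+ 4.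

Lemma T_widen N B : (N < B)%N ->
  T N = \sum_(k < B) (-1) ^+ k * ('C(N, k)%:R) ^+ 4.
Proof.
move=> hB; rewrite /T (big_ord_widen B (fun k => (-1) ^+ k * ('C(N, k)%:R) ^+ 4)) //.
rewrite big_mkcond; apply: eq_bigr => i _; case: ifP => // hi.
by rewrite bin_small ?expr0n ?mulr0 //; rewrite ltnNge -ltnS hi.
Qed.

Hypothesis hodd : odd p.

Lemma T_mul M s : (s < p)%N -> T (M * p + s) = T M * T s.
Proof.
move=> hs.
rewrite (T_widen (B := (M.+1 * p)%N)); last by rewrite mulSnr; lia.
rewrite (sum_reindex (fun k => (-1) ^+ k * ('C(M * p + s, k)%:R) ^+ 4 : 'F_p)) (T_widen (N := s) (B := p)) // mulr_suml.
apply: eq_bigr => m _; rewrite mulr_sumr; apply: eq_bigr => t _.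
rewrite lucas // natrM exprMn exprD -signr_odd oddM hodd andbT signr_odd.
ring.
Qed.

Definition af (j : nat) : 'F_p := ('C(2 * j, j))%:R * T (2 * j).

Lemma af0 : af 0 = 1.
Proof. by rewrite /af /T big_ord_recl big_ord0 /= muln0 bin0 expr0 mul1r expr1n addr0 mulr1. Qed.

Lemma af_mul n r : (r < p)%N -> af (n * p + r) = af n * af r.
Proof.
move=> hr; rewrite /af.
case: (ltnP (2 * r) p) => h2.
  have e : (2 * (n * p + r) = (2 * n) * p + 2 * r)%N by lia.
  rewrite e lucas // T_mul // natrM; ring.
have e : (2 * (n * p + r) = (2 * n).+1 * p + (2 * r - p))%N by rewrite mulSnr; lia.
have e2 : (2 * r = 1 * p + (2 * r - p))%N by lia.
have hlt : (2 * r - p < p)%N by lia.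
rewrite e lucas // (bin_small (n := (2 * r - p)%N)); last by lia.
have := @lucas 1 (2 * r - p) 0 r hlt hr.
rewrite -e2 mul0n add0n (bin_small (n := (2 * r - p)%N)); last by lia.
rewrite muln0 => ->.
by rewrite !muln0 !mul0r mulr0.
Qed.

End Lucas.

Lemma redp_af p j : redp p fcoef j = af p j.
Proof.
rewrite /redp /fcoef /af /T rmorphM /= rmorph_sum /=.
congr (_ * _); apply: eq_bigr => k _.
rewrite rmorphM /= rmorphXn /= rmorphN1 -natrX.
by []. Qed.

Lemma odd_prime p : prime p -> p != 2%N -> odd p.
Proof.
move=> hp h2; case: (even_prime hp) => //; by move/eqP: h2.
Qed.

Theorem mainTheorem19 :
  (exists J : seq nat, in_L (fun p => p \notin J) fcoef) /\
  (forall p : nat, prime p -> p != 2%N ->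
     Lambda p (redp p fcoef) = redp p fcoef).
Proof.
have hr : forall p, redp p fcoef = af p.
  by move=> p; apply: functional_extensionality => j; apply: redp_af.
split; last first.
  move=> p hp h2; rewrite hr; apply: functional_extensionality => n.
  have := @af_mul p hp (@odd_prime p hp h2) n 0 (prime_gt0 hp).
  by rewrite /Lambda addn0 af0 mulr1.
exists [:: 2%N]; exists 1; split => // p hp; rewrite inE => h2.
have ho := @odd_prime p hp h2.
pose P : {poly 'F_p} := \poly_(i < p) af p i.
exists 1%N, (sofp P), (maxn (pdeg P) (pdeg (1 : {poly 'F_p}))); split => //.
- exists P, (1 : {poly 'F_p}); split => //; first by rewrite oner_eq0.
  + exact: coprimep1.
  + apply: functional_extensionality => n; rewrite /smul /sofp big_ord_recl /=.
    rewrite coef1 mul1r subn0 big1 ?addr0 // => i _; by rewrite coef1 mul0r.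
- rewrite hr; apply: functional_extensionality => n.
  rewrite /smul /sofp /ssubst_pow expn1.
  have hrp : (n %% p < p)%N by rewrite ltn_pmod // prime_gt0.
  have hrn : (n %% p < n.+1)%N by rewrite ltnS leq_mod.
  rewrite (bigD1 (Ordinal hrn)) //= big1 ?addr0.
    rewrite coef_poly hrp.
    have -> : (n - n %% p = n %/ p * p)%N by rewrite {1}(divn_eq n p) addnK.
    rewrite dvdn_mull // mulnK ?prime_gt0 //.
    by rewrite {1}(divn_eq n p) (@af_mul p hp ho) // mulrC.
  move=> i hi; rewrite coef_poly.
  case: ifP => [ip|]; last by rewrite mul0r.
  case: ifP => [hd|]; last by rewrite mulr0.
  exfalso; move/eqP: hi; apply; apply: val_inj => /=.
  have hin : (i <= n)%N by rewrite -ltnS.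
  move: hd; rewrite -eqn_mod_dvd // => /eqP ->.
  by rewrite modn_small.
- rewrite expn1 mul1r ler_nat /pdeg size_poly1 /= maxn0. have := size_poly p (af p).
  by move=> h; apply: leq_trans (leq_pred _) h.
Qed.
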